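(* Let $G$ be a countable multiplicatively written Abelian group with identity $e$, let $\phi$ be a height on $G$, fix $\alpha\in G$, and let $I\subseteq(0,\infty)$ be an open interval (possibly unbounded) such that for every $t\in I$ the infimum in the definition of $\phi_t(\alpha)$ is attained. Then the following conditions are equivalent: (i) There exists a finite set $\mathcal X\subseteq\mathbb R^\infty$ such that $\phi_t(\alpha)=\min\{\|\mathbf x\|_t:\mathbf x\in\mathcal X\}$ for all $t\in I$. (ii) $I$ contains only finitely many exceptional points. (iii) There exists a finite set $R\subseteq G$ (containing $e$) that replaces $G$ uniformly on $I$. (iv) There exists a set $S\subseteq G$ (containing $e$) with $\phi(S)$ finite that replaces $G$ uniformly on $I$.
   Context: A height on an Abelian group $G$ is a map $\phi:G\to[0,\infty)$ with $\phi(e)=0$ and $\phi(\beta)=\phi(\beta^{-1})$ for all $\beta\in G$. For $S\subseteq G$ containing $e$, $S^\infty$ is the set of sequences $(\alpha_1,\alpha_2,\ldots)$ with all $\alpha_n\in S$ and $\alpha_n=e$ for all but finitely many $n$; $\tau_G(\alpha_1,\alpha_2,\ldots)=\prod_n\alpha_n$. $\mathbb R^\infty$ is the set of real sequences with finitely many nonzero entries, with $\|\mathbf x\|_t=(\sum_n|x_n|^t)^{1/t}$ for $t\in(0,\infty)$. The $t$-metric version of $\phi$ is $\phi_t(\alpha)=\inf\{\|(\phi(\alpha_1),\phi(\alpha_2),\ldots)\|_t:(\alpha_1,\alpha_2,\ldots)\in G^\infty,\ \tau_G(\alpha_1,\alpha_2,\ldots)=\alpha\}$; ''the infimum is attained''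 means some such sequence achieves it. A set $S\ni e$ replaces $G$ at $t$ if $\phi_t(\alpha)$ equals the same infimum taken only over sequences in $S^\infty$ with product $\alpha$; $S$ replaces $G$ uniformly on $I$ if it replaces $G$ at every $t\in I$. A subset $K\subseteq I$ is uniform if there exists $\mathbf x\in\mathbb R^\infty$ with $\phi_t(\alpha)=\|\mathbf x\|_t$ for all $t\in K$. A point $t\in I$ is standard if there is a uniform open interval $J\subseteq I$ containing $t$, and exceptional otherwise. *)

(* Defs.v *)
From Stdlib Require Import Reals List ClassicalEpsilon.
Import ListNotations.
Open Scope R_scope.

(* Real power x^t for x >= 0, t > 0, with the convention 0^t = 0
   (Stdlib's Rpower 0 t is exp(t * ln 0) = 1, which is wrong here). *)
Definition rpow (x t : R) : R :=
  if Req_EM_T x 0 then 0 else Rpower x t.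

(* A finitely supported real sequence is represented by the list of its
   first entries (all remaining entries are 0). *)
Definition tnorm (t : R) (xs : list R) : R :=
  rpow (fold_right Rplus 0 (map (fun x => rpow (Rabs x) t) xs)) (/ t).

Definition gprod {G : Type} (mul : G -> G -> G) (e : G) (l : list G) : G :=
  fold_right mul e l.

Definition tvals {G : Type} (mul : G -> G -> G) (e : G) (phi : G -> R)
  (S : G -> Prop) (t : R) (alpha : G) (v : R) : Prop :=
  exists l : list G, Forall S l /\ gprod mul e l = alpha /\
                     v = tnorm t (map phi l).

Definition is_glb (E : R -> Prop) (m : R) : Prop :=
  (forall x, E x -> m <= x) /\ (forall b, (forall x, E x -> b <= x) -> b <= m).

Definition Inf (E : R -> Prop) : R :=
  epsilon (inhabits 0) (fun m => is_glb E m).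

Definition phit {G : Type} (mul : G -> G -> G) (e : G) (phi : G -> R)
  (t : R) (alpha : G) : R :=
  Inf (tvals mul e phi (fun _ => True) t alpha).

Definition attained {G : Type} (mul : G -> G -> G) (e : G) (phi : G -> R)
  (t : R) (alpha : G) : Prop :=
  exists l : list G, gprod mul e l = alpha /\
                     tnorm t (map phi l) = phit mul e phi t alpha.

Definition replaces_at {G : Type} (mul : G -> G -> G) (e : G) (phi : G -> R)
  (alpha : G) (S : G -> Prop) (t : R) : Prop :=
  phit mul e phi t alpha = Inf (tvals mul e phi S t alpha).

(* Open intervals with possibly infinite endpoints (None = -oo / +oo). *)
Definition in_oint (lo hi : option R) (t : R) : Prop :=
  match lo with Some a => a < t | None => True end /\
  match hi with Some b => t < b | None => True end.

Definition replaces_unif {G : Type} (mul : G -> G -> G) (e : G) (phi : G -> R)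
  (alpha : G) (S : G -> Prop) (I : R -> Prop) : Prop :=
  forall t, I t -> replaces_at mul e phi alpha S t.

Definition uniform {G : Type} (mul : G -> G -> G) (e : G) (phi : G -> R)
  (alpha : G) (K : R -> Prop) : Prop :=
  exists x : list R, forall t, K t -> phit mul e phi t alpha = tnorm t x.

Definition standard {G : Type} (mul : G -> G -> G) (e : G) (phi : G -> R)
  (alpha : G) (I : R -> Prop) (t : R) : Prop :=
  exists lo hi : option R,
    in_oint lo hi t /\ (forall s, in_oint lo hi s -> I s) /\
    uniform mul e phi alpha (in_oint lo hi).

Definition exceptional {G : Type} (mul : G -> G -> G) (e : G) (phi : G -> R)
  (alpha : G) (I : R -> Prop) (t : R) : Prop :=
  I t /\ ~ standard mul e phi alpha I t.

(* Main.v *)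
Require Import Defs.
From Stdlib Require Import Reals List Lra Lia Classical ClassicalEpsilon FunctionalExtensionality PropExtensionality Cantor.
Import ListNotations.
Open Scope R_scope.

Lemma rpow_0 s : rpow 0 s = 0.
Proof. unfold rpow. destruct (Req_EM_T 0 0); [reflexivity|congruence]. Qed.

Lemma rpow_pos y s : 0 < y -> rpow y s = exp (s * ln y).
Proof. intros H. unfold rpow. destruct (Req_EM_T y 0); [lra|reflexivity]. Qed.

Lemma rpow_nonneg y s : 0 <= rpow y s.
Proof. unfold rpow. destruct (Req_EM_T y 0); [lra|]. unfold Rpower. left; apply exp_pos. Qed.

Lemma rpow_lt y1 y2 s : 0 < s -> 0 <= y1 -> y1 < y2 -> rpow y1 s < rpow y2 s.
Proof.
  intros Hs H1 H12. rewrite (rpow_pos y2) by lra.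
  destruct (Req_EM_T y1 0) as [->|Hn].
  - rewrite rpow_0. apply exp_pos.
  - rewrite rpow_pos by lra. apply exp_increasing.
    apply Rmult_lt_compat_l; [lra|]. apply ln_increasing; lra.
Qed.

Lemma rpow_le_iff y1 y2 s : 0 < s -> 0 <= y1 -> 0 <= y2 ->
  (rpow y1 s <= rpow y2 s <-> y1 <= y2).
Proof.
  intros Hs H1 H2. split; intro H.
  - destruct (Rle_lt_dec y1 y2); auto. pose proof (rpow_lt y2 y1 s Hs H2 r). lra.
  - destruct H as [H|H]; [left; apply rpow_lt; auto|subst; lra].
Qed.

Lemma rpow_eq_iff y1 y2 s : 0 < s -> 0 <= y1 -> 0 <= y2 ->
  (rpow y1 s = rpow y2 s <-> y1 = y2).
Proof.
  intros Hs H1 H2. split; intro H; [|subst; auto].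
  destruct (Rtotal_order y1 y2) as [h|[h|h]]; auto.
  - pose proof (rpow_lt y1 y2 s Hs H1 h); lra.
  - pose proof (rpow_lt y2 y1 s Hs H2 h); lra.
Qed.

Lemma rpow_inv_pow c t : 0 < t -> 0 <= c -> rpow (rpow c t) (/ t) = c.
Proof.
  intros Ht Hc. destruct (Req_EM_T c 0) as [->|Hn].
  - rewrite !rpow_0. auto.
  - rewrite (rpow_pos c) by lra. rewrite rpow_pos by apply exp_pos.
    rewrite ln_exp. replace (/ t * (t * ln c)) with (ln c) by (field; lra).
    apply exp_ln; lra.
Qed.

Definition Psum (t : R) (xs : list R) : R :=
  fold_right Rplus 0 (map (fun x => rpow (Rabs x) t) xs).

Lemma tnorm_Psum t xs : tnorm t xs = rpow (Psum t xs) (/ t).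
Proof. reflexivity. Qed.

Lemma Psum_nonneg t xs : 0 <= Psum t xs.
Proof.
  unfold Psum; induction xs; simpl; [lra|]. pose proof (rpow_nonneg (Rabs a) t). lra.
Qed.

Lemma tnorm_le_iff t v w : 0 < t -> (tnorm t v <= tnorm t w <-> Psum t v <= Psum t w).
Proof. intros. rewrite !tnorm_Psum. apply rpow_le_iff; try apply Psum_nonneg. apply Rinv_0_lt_compat; auto. Qed.

Lemma tnorm_eq_iff t v w : 0 < t -> (tnorm t v = tnorm t w <-> Psum t v = Psum t w).
Proof. intros. rewrite !tnorm_Psum. apply rpow_eq_iff; try apply Psum_nonneg. apply Rinv_0_lt_compat; auto. Qed.

Definition Esum (l : list (R * R)) (t : R) : R :=
  fold_right (fun p acc => fst p * exp (snd p * t) + acc) 0 l.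

Definition dcoefs (l : list (R*R)) := map (fun p => (fst p * snd p, snd p)) l.

Lemma Esum_cons c a l t : Esum ((c,a)::l) t = c * exp (a * t) + Esum l t.
Proof. reflexivity. Qed.

Lemma Esum_deriv l t : derivable_pt_lim (Esum l) t (Esum (dcoefs l) t).
Proof.
  induction l as [|[c a] l IH].
  - simpl. unfold Esum; simpl. apply derivable_pt_lim_const.
  - simpl dcoefs. rewrite Esum_cons.
    change (Esum ((c,a)::l)) with (fun t => c * exp (a*t) + Esum l t).
    apply (derivable_pt_lim_plus (fun t => c * exp (a * t)) (Esum l)); auto.
    replace (c * a * exp (a * t)) with (c * (exp (a*t) * a)) by ring.
    apply (derivable_pt_lim_scal (fun t => exp (a*t)) c).
    apply (derivable_pt_lim_comp (fun t => a * t) exp).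
    + assert (H := derivable_pt_lim_scal id a t 1 (derivable_pt_lim_id t)).
      rewrite Rmult_1_r in H. exact H.
    + apply derivable_pt_lim_exp.
Qed.

Lemma dcoefs_length l : length (dcoefs l) = length l.
Proof. apply length_map. Qed.

Lemma Esum_app l1 l2 t : Esum (l1 ++ l2) t = Esum l1 t + Esum l2 t.
Proof. induction l1 as [|[c a] l IH]; simpl; unfold Esum in *; simpl; [ring|rewrite IH; ring]. Qed.

Definition negc (l : list (R*R)) := map (fun p => (- fst p, snd p)) l.
Lemma Esum_neg l t : Esum (negc l) t = - Esum l t.
Proof. induction l as [|[c a] l IH]; unfold Esum in *; simpl; [ring|rewrite IH; ring]. Qed.

Definition shiftc (a : R) (l : list (R*R)) := map (fun p => (fst p, snd p - a)) l.
Lemma Esum_shift a l t : exp (- a * t) * Esum l t = Esum (shiftc a l) t.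
Proof.
  induction l as [|[c b] l IH]; unfold Esum in *; simpl; [ring|].
  rewrite Rmult_plus_distr_l, IH.
  replace (exp (- a * t) * (c * exp (b * t))) with (c * (exp (-a*t) * exp (b*t))) by ring.
  rewrite <- exp_plus. f_equal. f_equal. f_equal. ring.
Qed.

Fixpoint incr (l : list R) : Prop :=
  match l with
  | a :: t => match t with b :: _ => a < b /\ incr t | nil => True end
  | nil => True
  end.

Lemma incr_head_lt a l : incr (a :: l) -> forall z, In z l -> a < z.
Proof.
  revert a. induction l as [|b l IH]; intros a H z Hz; [destruct Hz|].
  destruct H as [Hab Hl]. destruct Hz as [->|Hz]; auto.
  specialize (IH b Hl z Hz). lra.
Qed.

Lemma rolle_list (f f' : R -> R) (Hd : forall x, derivable_pt_lim f x (f' x)) :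
  forall zs, incr zs -> (forall z, In z zs -> f z = 0) ->
  exists ws, incr ws /\ length ws = pred (length zs) /\ (forall w, In w ws -> f' w = 0)
    /\ (forall w, In w ws -> forall z0, hd_error zs = Some z0 -> z0 < w).
Proof.
  induction zs as [|z1 zs IH]; intros Hi Hz.
  - exists nil. simpl. repeat split; auto; intros w [].
  - destruct zs as [|z2 zs].
    + exists nil. simpl. repeat split; auto; intros w [].
    + destruct Hi as [H12 Hi].
      destruct (IH Hi (fun z h => Hz z (or_intror h))) as [ws [Hws1 [Hws2 [Hws3 Hws4]]]].
      assert (pr : forall x, z1 < x < z2 -> derivable_pt f x).
      { intros x _. exists (f' x). apply Hd. }
      destruct (Rolle f z1 z2 pr) as [c [Pc Hc]].
      { intros x _. apply derivable_continuous_pt. exists (f' x). apply Hd. }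
      { auto. }
      { rewrite (Hz z1), (Hz z2); simpl; auto. }
      rewrite (derive_pt_eq_0 f c (f' c)) in Hc by apply Hd.
      exists (c :: ws). split; [|split; [|split]].
      * destruct ws as [|w ws]; simpl; auto. split; auto.
        specialize (Hws4 w (or_introl eq_refl) z2 eq_refl). lra.
      * simpl in *. lia.
      * intros w [<-|Hw]; auto.
      * intros w Hw z0 Hz0. simpl in Hz0. inversion Hz0; subst z0.
        destruct Hw as [<-|Hw]; [lra|]. specialize (Hws4 w Hw z2 eq_refl). lra.
Qed.

Lemma Esum_ident_n : forall n l, length l = n -> forall zs, incr zs -> (length l < length zs)%nat ->
  (forall z, In z zs -> Esum l z = 0) -> forall t, Esum l t = 0.
Proof.
  induction n as [|n IH]; intros l Hl zs Hi Hlen Hz t.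
  - destruct l; [reflexivity|discriminate].
  - destruct l as [|[c a] l]; [discriminate|]. simpl in Hl. injection Hl as Hl.
    set (g := fun t => c + Esum (shiftc a l) t).
    assert (Hg : forall t, g t = exp (- a * t) * Esum ((c,a)::l) t).
    { intro s. unfold g. rewrite Esum_cons, Rmult_plus_distr_l, Esum_shift.
      replace (exp (- a * s) * (c * exp (a * s))) with (c * (exp (-a*s) * exp (a*s))) by ring.
      rewrite <- exp_plus. replace (- a * s + a * s) with 0 by ring. rewrite exp_0. ring. }
    assert (Hgd : forall x, derivable_pt_lim g x (Esum (dcoefs (shiftc a l)) x)).
    { intro x. unfold g. replace (Esum (dcoefs (shiftc a l)) x) with (0 + Esum (dcoefs (shiftc a l)) x) by ring.
      apply (derivable_pt_lim_plus (fun _ => c) (Esum (shiftc a l))).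
      apply derivable_pt_lim_const. apply Esum_deriv. }
    destruct (rolle_list g _ Hgd zs Hi) as [ws [Hwi [Hwl [Hw _]]]].
    { intros z Hz'. rewrite Hg, Hz; auto. ring. }
    assert (Hd0 : forall x, Esum (dcoefs (shiftc a l)) x = 0).
    { apply (IH _ (eq_trans (dcoefs_length _) (eq_trans (length_map _ _) Hl)) ws Hwi).
      - rewrite dcoefs_length, length_map. simpl in Hlen. lia.
      - auto. }
    assert (pr : derivable g). { intro x. exists (Esum (dcoefs (shiftc a l)) x). apply Hgd. }
    assert (Hc : constant g).
    { apply (null_derivative_1 g pr). intro x. rewrite (derive_pt_eq_0 g x _ (pr x) (Hgd x)). auto. }
    destruct zs as [|z0 zs]; [simpl in Hlen; lia|].
    assert (g t = 0). { rewrite (Hc t z0), Hg, Hz; [ring|left; auto]. }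
    rewrite Hg in H.
    apply Rmult_integral in H. destruct H as [H|H]; auto.
    pose proof (exp_pos (-a*t)); lra.
Qed.


Definition coefs (v : list R) : list (R*R) :=
  map (fun x => (if Req_EM_T (Rabs x) 0 then 0 else 1, ln (Rabs x))) v.

Lemma Psum_Esum t v : Psum t v = Esum (coefs v) t.
Proof.
  induction v as [|x v IH]; [reflexivity|].
  unfold Psum, coefs in *; simpl. rewrite IH. f_equal.
  unfold rpow. destruct (Req_EM_T (Rabs x) 0); [ring|]. unfold Rpower. rewrite Rmult_comm. ring.
Qed.

Fixpoint ins (x : R) (l : list R) : list R :=
  match l with
  | nil => [x]
  | y :: l' => if Rlt_dec x y then x :: y :: l' else y :: ins x l'
  end.

Lemma ins_In x l z : In z (ins x l) <-> x = z \/ In z l.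
Proof.
  induction l as [|y l IH]; simpl; [tauto|].
  destruct (Rlt_dec x y); simpl; [tauto|]. rewrite IH. tauto.
Qed.

Lemma ins_length x l : length (ins x l) = S (length l).
Proof. induction l as [|y l IH]; simpl; auto. destruct (Rlt_dec x y); simpl; auto. Qed.

Lemma ins_incr x l : incr l -> ~ In x l -> incr (ins x l).
Proof.
  induction l as [|y l IH]; intros Hi Hn; simpl; auto.
  destruct (Rlt_dec x y) as [h|h].
  - simpl. split; auto.
  - assert (y < x). { destruct (Rtotal_order x y) as [?|[?|?]]; [lra| subst; exfalso; apply Hn; left; auto|lra]. }
    assert (Hi' : incr l) by (destruct l; simpl in *; tauto).
    specialize (IH Hi' (fun h => Hn (or_intror h))).
    destruct l as [|z l]; simpl in *; [split; auto|].
    destruct (Rlt_dec x z); simpl; [tauto|]. destruct (ins x l) eqn:E; simpl in *; tauto.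
Qed.

Lemma sort_exists zs : NoDup zs -> exists ys, incr ys /\ length ys = length zs /\ (forall y, In y ys -> In y zs).
Proof.
  induction zs as [|z zs IH]; intros Hn.
  - exists nil; simpl; repeat split; auto.
  - inversion Hn as [|? ? Hnz Hnd]; subst. destruct (IH Hnd) as [ys [H1 [H3 H4]]].
    exists (ins z ys). split; [apply ins_incr; auto|split].
    + rewrite ins_length; simpl; auto.
    + intros y Hy. apply ins_In in Hy. simpl. destruct Hy; auto.
Qed.

Lemma Psum_ident v w zs : NoDup zs -> (length v + length w < length zs)%nat ->
  (forall z, In z zs -> Psum z v = Psum z w) -> forall s, Psum s v = Psum s w.
Proof.
  intros Hn Hl Hz s.
  destruct (sort_exists zs Hn) as [ys [Hi [Hyl Hyi]]].
  assert (H := Esum_ident_n _ (coefs v ++ negc (coefs w)) eq_refl ys Hi).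
  assert (Esum (coefs v ++ negc (coefs w)) s = 0).
  { apply H.
    - rewrite length_app. unfold negc, coefs. rewrite !length_map. lia.
    - intros z Hz'. rewrite Esum_app, Esum_neg, <- !Psum_Esum, Hz; auto. ring. }
  rewrite Esum_app, Esum_neg, <- !Psum_Esum in H0. lra.
Qed.

Lemma tnorm_ident v w zs : NoDup zs -> (length v + length w < length zs)%nat ->
  (forall z, In z zs -> 0 < z /\ tnorm z v = tnorm z w) -> forall s, 0 < s -> tnorm s v = tnorm s w.
Proof.
  intros Hn Hl Hz s Hs. apply tnorm_eq_iff; auto.
  apply (Psum_ident v w zs Hn Hl). intros z Hz'. destruct (Hz z Hz') as [H1 H2].
  apply tnorm_eq_iff; auto.
Qed.

Lemma bounded_finite (A : Type) : forall (M : nat) (P : A -> Prop),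
  ~ (exists zs, NoDup zs /\ length zs = M /\ Forall P zs) ->
  exists L, forall z, P z -> In z L.
Proof.
  induction M as [|M IH]; intros P H.
  - exfalso. apply H. exists nil. repeat split; auto. constructor.
  - destruct (classic (exists z, P z)) as [[z0 Hz0]|Hne].
    + destruct (IH (fun z => P z /\ z <> z0)) as [L HL].
      { intros [zs [H1 [H2 H3]]]. apply H. exists (z0 :: zs). split; [|split].
        - constructor; auto. intro Hin. rewrite Forall_forall in H3. apply (H3 z0 Hin); auto.
        - simpl; auto.
        - constructor; auto. rewrite Forall_forall in *. intros x Hx; apply H3; auto. }
      exists (z0 :: L). intros z Hz. destruct (classic (z = z0)) as [Heq|Hn]; [left; auto|right; auto].
    + exists nil. intros z Hz. exfalso; eauto.
Qed.

Lemma interval_points : forall N c d, c < d -> exists zs, NoDup zs /\ length zs = N /\ forall z, In z zs -> c < z < d.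
Proof.
  induction N as [|N IH]; intros c d Hcd.
  - exists nil. split; [constructor|split; [reflexivity|intros z0 []]].
  - destruct (IH c ((c+d)/2)) as [zs [H1 [H2 H3]]]; [lra|].
    exists (d - (d - c)/4 :: zs). split; [|split].
    + constructor; auto. intro Hin. specialize (H3 _ Hin). lra.
    + simpl; auto.
    + intros z [<-|Hz]; [lra|]. specialize (H3 _ Hz). lra.
Qed.

Definition third_step (e : nat -> R) (p : R * R) (n : nat) : R * R :=
  let c := fst p in let d := snd p in
  if Rle_dec (e n) (c + (d - c)/3) then (c + 2*((d-c)/3), d) else (c, c + (d-c)/3).

Fixpoint nest (e : nat -> R) (a b : R) (n : nat) : R * R :=
  match n with
  | O => (a, b)
  | S m => third_step e (nest e a b m) m
  end.

Lemma third_props e p n : fst p < snd p ->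
  fst (third_step e p n) < snd (third_step e p n) /\ fst p <= fst (third_step e p n) /\
  snd (third_step e p n) <= snd p /\ (e n < fst (third_step e p n) \/ snd (third_step e p n) < e n).
Proof.
  intros H. unfold third_step. destruct (Rle_dec (e n) (fst p + (snd p - fst p)/3)); simpl; lra.
Qed.

Lemma nest_lt e a b : a < b -> forall n, fst (nest e a b n) < snd (nest e a b n).
Proof. intros Hab n; induction n; simpl; [auto|apply third_props; auto]. Qed.

Lemma nest_props e a b : a < b -> forall n,
  fst (nest e a b n) < snd (nest e a b n) /\
  fst (nest e a b n) <= fst (nest e a b (S n)) /\ snd (nest e a b (S n)) <= snd (nest e a b n) /\
  (e n < fst (nest e a b (S n)) \/ snd (nest e a b (S n)) < e n).
Proof.
  intros Hab n. split; [apply nest_lt; auto|].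
  change (nest e a b (S n)) with (third_step e (nest e a b n) n).
  destruct (third_props e (nest e a b n) n (nest_lt e a b Hab n)) as [_ H]. exact H.
Qed.

Lemma nest_mono e a b : a < b -> forall n m, (n <= m)%nat ->
  fst (nest e a b n) <= fst (nest e a b m) /\ snd (nest e a b m) <= snd (nest e a b n).
Proof.
  intros Hab n m Hnm. induction Hnm; [lra|].
  destruct (nest_props e a b Hab m) as [_ [H1 [H2 _]]]. lra.
Qed.

Lemma nest_cross e a b : a < b -> forall n m, fst (nest e a b n) <= snd (nest e a b m).
Proof.
  intros Hab n m. destruct (nest_mono e a b Hab n (Nat.max n m) (Nat.le_max_l _ _)).
  destruct (nest_mono e a b Hab m (Nat.max n m) (Nat.le_max_r _ _)).
  destruct (nest_props e a b Hab (Nat.max n m)) as [H5 _]. lra.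
Qed.

Lemma R_uncountable (e : nat -> R) a b : a < b -> exists z, a <= z <= b /\ forall n, e n <> z.
Proof.
  intros Hab.
  set (E := fun x => exists n, x = fst (nest e a b n)).
  destruct (completeness E) as [m [Hub Hlub]].
  { exists b. intros x [n ->]. pose proof (nest_cross e a b Hab n 0). simpl in H. auto. }
  { exists a. exists 0%nat. reflexivity. }
  assert (Hl : forall n, fst (nest e a b n) <= m). { intro n. apply Hub. exists n; auto. }
  assert (Hr : forall n, m <= snd (nest e a b n)). { intro n. apply Hlub. intros x [k ->]. apply nest_cross; auto. }
  exists m. split.
  - split; [apply (Hl 0%nat)|apply (Hr 0%nat)].
  - intros n Hn. destruct (nest_props e a b Hab n) as [_ [_ [_ H4]]].
    specialize (Hl (S n)); specialize (Hr (S n)). lra.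
Qed.

Lemma fiber_big (g : R -> nat) (M : nat -> nat) a b : a < b ->
  exists n zs, NoDup zs /\ length zs = M n /\ forall z, In z zs -> a < z < b /\ g z = n.
Proof.
  intros Hab. apply NNPP. intro Hno.
  assert (Hfin : forall n, exists L, forall z, (a < z < b /\ g z = n) -> In z L).
  { intro n. apply (bounded_finite R (M n)). intros [zs [H1 [H2 H3]]]. apply Hno.
    exists n, zs. rewrite Forall_forall in H3. auto. }
  destruct (choice _ Hfin) as [Lf HLf].
  set (e := fun k => let p := Cantor.of_nat k in nth (snd p) (Lf (fst p)) 0).
  destruct (R_uncountable e ((2*a+b)/3) ((a+2*b)/3)) as [z [Hz1 Hz2]]; [lra|].
  assert (Hin : In z (Lf (g z))) by (apply HLf; split; [lra|auto]).
  destruct (In_nth _ _ 0 Hin) as [i [_ Hi]].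
  apply (Hz2 (Cantor.to_nat (g z, i))). unfold e. rewrite Cantor.cancel_of_to. simpl. auto.
Qed.

Fixpoint decl (n c : nat) : list nat :=
  match n with
  | O => nil
  | S n' => let p := Cantor.of_nat c in fst p :: decl n' (snd p)
  end.

Definition decnat (k : nat) : list nat := let p := Cantor.of_nat k in decl (fst p) (snd p).

Lemma decnat_surj s : exists k, decnat k = s.
Proof.
  assert (H : exists c, decl (length s) c = s).
  { induction s as [|h s [c Hc]]; [exists 0%nat; reflexivity|].
    exists (Cantor.to_nat (h, c)). cbn [length decl]. rewrite Cantor.cancel_of_to. cbn [fst snd]. rewrite Hc; auto. }
  destruct H as [c Hc]. exists (Cantor.to_nat (length s, c)). unfold decnat.
  rewrite Cantor.cancel_of_to. simpl. auto.
Qed.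

Lemma list_enum (G : Type) (f : nat -> G) : (forall x, exists n, f n = x) ->
  forall l : list G, exists k, map f (decnat k) = l.
Proof.
  intros Hf l.
  assert (exists s, map f s = l).
  { induction l as [|x l [s Hs]]; [exists nil; auto|]. destruct (Hf x) as [n Hn].
    exists (n :: s); simpl; rewrite Hn, Hs; auto. }
  destruct H as [s Hs]. destruct (decnat_surj s) as [k Hk]. exists k. rewrite Hk; auto.
Qed.


Lemma fin_choice {A X : Type} (Good : X -> Prop) (Q : A -> list X -> Prop)
  (Hmono : forall a Z Z', (forall z, In z Z -> In z Z') -> Q a Z -> Q a Z') :
  forall l, (forall a, In a l -> exists Z, (forall z, In z Z -> Good z) /\ Q a Z) ->
  exists Z, (forall z, In z Z -> Good z) /\ forall a, In a l -> Q a Z.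
Proof.
  induction l as [|a l IH]; intros H.
  - exists nil. split; [intros z []|intros a []].
  - destruct (H a (or_introl eq_refl)) as [Z1 [G1 Q1]].
    destruct (IH (fun b h => H b (or_intror h))) as [Z2 [G2 Q2]].
    exists (Z1 ++ Z2). split.
    + intros z Hz. apply in_app_or in Hz. destruct Hz; auto.
    + intros b [<-|Hb].
      * apply (Hmono a Z1); auto. intros z Hz; apply in_or_app; auto.
      * apply (Hmono b Z2); auto. intros z Hz; apply in_or_app; auto.
Qed.

Lemma glb_exists (E : R -> Prop) : (exists x, E x) -> (forall x, E x -> 0 <= x) -> exists m, is_glb E m.
Proof.
  intros [x0 Hx0] Hlb.
  destruct (completeness (fun y => E (- y))) as [m [Hub Hlub]].
  { exists 0. intros y Hy. specialize (Hlb _ Hy). lra. }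
  { exists (- x0). rewrite Ropp_involutive. auto. }
  exists (- m). split.
  - intros x Hx. assert (- x <= m) by (apply Hub; rewrite Ropp_involutive; auto). lra.
  - intros b Hb. assert (m <= - b). { apply Hlub. intros y Hy. specialize (Hb _ Hy). lra. } lra.
Qed.

Lemma Inf_spec E : (exists x, E x) -> (forall x, E x -> 0 <= x) -> is_glb E (Inf E).
Proof. intros H1 H2. unfold Inf. apply epsilon_spec. apply glb_exists; auto. Qed.

Lemma glb_unique E m1 m2 : is_glb E m1 -> is_glb E m2 -> m1 = m2.
Proof. intros [A1 B1] [A2 B2]. apply Rle_antisym; [apply B2|apply B1]; auto. Qed.

Lemma tnorm_nonneg t v : 0 <= tnorm t v.
Proof. apply rpow_nonneg. Qed.

Lemma tvals_nonneg {G} mul (e : G) phi S t alpha x : tvals mul e phi S t alpha x -> 0 <= x.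
Proof. intros [l [_ [_ ->]]]. apply tnorm_nonneg. Qed.

Lemma phit_glb {G} mul (e : G) phi t alpha (mul_e : forall x, mul x e = x) :
  is_glb (tvals mul e phi (fun _ => True) t alpha) (phit mul e phi t alpha).
Proof.
  apply Inf_spec.
  - exists (tnorm t (map phi [alpha])). exists [alpha]. split; [constructor; auto|]. split; auto.
    unfold gprod; simpl; auto.
  - apply tvals_nonneg.
Qed.

Lemma phit_le {G} mul (e : G) phi t alpha (mul_e : forall x, mul x e = x) l :
  gprod mul e l = alpha -> phit mul e phi t alpha <= tnorm t (map phi l).
Proof.
  intros H. apply (phit_glb mul e phi t alpha mul_e). exists l. split; auto.
  rewrite Forall_forall; auto.
Qed.

Lemma phit_nonneg {G} mul (e : G) phi t alpha (mul_e : forall x, mul x e = x) :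
  0 <= phit mul e phi t alpha.
Proof.
  apply (phit_glb mul e phi t alpha mul_e). intros x Hx. eapply tvals_nonneg; eauto.
Qed.

Lemma replaces_of_attain {G} mul (e : G) phi t alpha (mul_e : forall x, mul x e = x) (S : G -> Prop) l :
  Forall S l -> gprod mul e l = alpha -> tnorm t (map phi l) = phit mul e phi t alpha ->
  replaces_at mul e phi alpha S t.
Proof.
  intros HS Hg Ht. unfold replaces_at.
  assert (Hglb : is_glb (tvals mul e phi S t alpha) (phit mul e phi t alpha)).
  { split.
    - intros x [l' [_ [Hg' ->]]]. apply phit_le; auto.
    - intros b Hb. rewrite <- Ht. apply Hb. exists l; auto. }
  apply (glb_unique _ _ _ Hglb). apply Inf_spec.
  - exists (tnorm t (map phi l)). exists l; auto.
  - apply tvals_nonneg.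
Qed.

Definition vle (a b : list nat) := Forall2 le a b.

Definition maxhd (B : list (list nat)) : nat := fold_right (fun b m => Nat.max (hd 0%nat b) m) 0%nat B.
Lemma maxhd_ge B h r : In (h :: r) B -> (h <= maxhd B)%nat.
Proof.
  induction B as [|b B IH]; intros Hin; [destruct Hin|]. simpl.
  destruct Hin as [->|Hin]; simpl; [lia|]. specialize (IH Hin). lia.
Qed.

Lemma dickson : forall k (A : list nat -> Prop), (forall a, A a -> length a = k) ->
  exists B, (forall b, In b B -> A b) /\ forall a, A a -> exists b, In b B /\ vle b a.
Proof.
  induction k as [|k IH]; intros A HA.
  - destruct (classic (exists a, A a)) as [[a0 Ha0]|Hn].
    + exists [a0]. split; [intros b [<-|[]]; auto|]. intros a Ha. exists a0. split; [left; auto|].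
      pose proof (HA _ Ha); pose proof (HA _ Ha0). destruct a, a0; try discriminate. constructor.
    + exists nil. split; [intros b []|]. intros a Ha; exfalso; eauto.
  - set (T := fun r => exists h, A (h :: r)).
    destruct (IH T) as [BT [HBT1 HBT2]].
    { intros r [h Hh]. specialize (HA _ Hh). simpl in HA. lia. }
    destruct (fin_choice A (fun r Z => exists h, In (h :: r) Z)) with (l := BT) as [HB [HHB1 HHB2]].
    { intros a Z Z' Hz [h Hh]. exists h; auto. }
    { intros r Hr. destruct (HBT1 r Hr) as [h Hh]. exists [h :: r]. split.
      - intros z [<-|[]]; auto.
      - exists h; left; auto. }
    set (H := maxhd HB).
    destruct (fin_choice A (fun c Z => forall r, A (c :: r) -> exists b, In b Z /\ vle b (c :: r)))
      with (l := seq 0 H) as [BC [HBC1 HBC2]].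
    { intros a Z Z' Hz Hq r Hr. destruct (Hq r Hr) as [b [Hb1 Hb2]]. exists b; auto. }
    { intros c _. destruct (IH (fun r => A (c :: r))) as [Bc [HBc1 HBc2]].
      { intros r Hr. specialize (HA _ Hr). simpl in HA. lia. }
      exists (map (cons c) Bc). split.
      - intros z Hz. apply in_map_iff in Hz. destruct Hz as [r [<- Hr]]. auto.
      - intros r Hr. destruct (HBc2 r Hr) as [b [Hb1 Hb2]]. exists (c :: b). split.
        + apply in_map; auto.
        + constructor; auto. }
    exists (HB ++ BC). split.
    + intros b Hb. apply in_app_or in Hb. destruct Hb; auto.
    + intros a Ha. destruct a as [|h r]; [specialize (HA _ Ha); discriminate|].
      destruct (HBT2 r (ex_intro _ h Ha)) as [r0 [Hr0 Hr0le]].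
      destruct (HHB2 r0 Hr0) as [h0 Hh0].
      destruct (Compare_dec.le_lt_dec h0 h) as [Hle|Hlt].
      * exists (h0 :: r0). split; [apply in_or_app; auto|constructor; auto].
      * assert (Hin : In h (seq 0 H)). { apply in_seq. pose proof (maxhd_ge HB h0 r0 Hh0). unfold H. lia. }
        destruct (HBC2 h Hin r Ha) as [b [Hb1 Hb2]]. exists b. split; [apply in_or_app; auto|auto].
Qed.


Definition wsumf (t : R) (f : R -> nat) (L : list R) : R :=
  fold_right (fun y acc => INR (f y) * rpow (Rabs y) t + acc) 0 L.

Lemma wsumf_add t f g L : wsumf t (fun y => (f y + g y)%nat) L = wsumf t f L + wsumf t g L.
Proof. induction L; unfold wsumf in *; simpl; [ring|rewrite IHL, plus_INR; ring]. Qed.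

Lemma wsumf_zero t L : wsumf t (fun _ => 0%nat) L = 0.
Proof. induction L; unfold wsumf in *; simpl in *; [ring|rewrite IHL; ring]. Qed.

Lemma wsumf_ext t f g L : (forall y, In y L -> f y = g y) -> wsumf t f L = wsumf t g L.
Proof.
  induction L as [|y L IH]; intros H; unfold wsumf in *; simpl; auto.
  rewrite H by (left; auto). rewrite IH; auto. intros z Hz; apply H; right; auto.
Qed.

Lemma wsumf_indic t x L : NoDup L -> In x L ->
  wsumf t (fun y => if Req_EM_T x y then 1%nat else 0%nat) L = rpow (Rabs x) t.
Proof.
  induction L as [|y L IH]; intros Hn Hin; [destruct Hin|]. inversion Hn as [|? ? Hny Hnd]; subst.
  unfold wsumf in *; simpl. destruct (Req_EM_T x y) as [->|Hne].
  - fold (wsumf t (fun y0 => if Req_EM_T y y0 then 1%nat else 0%nat) L).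
    rewrite (wsumf_ext t _ (fun _ => 0%nat)), wsumf_zero. simpl; ring.
    intros z Hz. destruct (Req_EM_T y z); auto. subst; contradiction.
  - destruct Hin as [->|Hin]; [congruence|]. simpl. rewrite IH; auto. ring.
Qed.

Lemma Psum_wsumf t v L : NoDup L -> (forall x, In x v -> In x L) ->
  Psum t v = wsumf t (fun y => count_occ Req_EM_T v y) L.
Proof.
  intros Hn. induction v as [|x v IH]; intros Hv.
  - simpl. rewrite wsumf_zero. reflexivity.
  - transitivity (wsumf t (fun y => ((if Req_EM_T x y then 1 else 0) + count_occ Req_EM_T v y)%nat) L).
    + rewrite wsumf_add, wsumf_indic; auto; [|apply Hv; left; auto].
      change (Psum t (x :: v)) with (rpow (Rabs x) t + Psum t v). f_equal.
      apply IH. intros z Hz; apply Hv; right; auto.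
    + apply wsumf_ext. intros y _. simpl. destruct (Req_EM_T x y); reflexivity.
Qed.

Lemma wsumf_mono t f g L : vle (map f L) (map g L) -> wsumf t f L <= wsumf t g L.
Proof.
  induction L as [|y L IH]; intros H; unfold wsumf in *; simpl; [lra|].
  inversion H as [|? ? ? ? H1 H2]; subst.
  apply Rplus_le_compat; auto. apply Rmult_le_compat_r; [apply rpow_nonneg|]. apply le_INR; auto.
Qed.

Lemma argmin_list {A} (f : A -> R) (Z : list A) : Z <> nil -> exists x, In x Z /\ forall y, In y Z -> f x <= f y.
Proof.
  induction Z as [|a Z IH]; intros H; [congruence|].
  destruct Z as [|b Z].
  - exists a. split; [left; auto|]. intros y [<-|[]]; lra.
  - destruct IH as [x [Hx1 Hx2]]; [congruence|].
    destruct (Rle_dec (f a) (f x)).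
    + exists a. split; [left; auto|]. intros y [<-|Hy]; [lra|]. specialize (Hx2 y Hy). lra.
    + exists x. split; [right; auto|]. intros y [<-|Hy]; [lra|auto].
Qed.

Lemma iv_to_i {G} (mul : G -> G -> G) (e : G) (phi : G -> R) (alpha : G)
  (mul_e : forall x, mul x e = x) (I : R -> Prop) (HIpos : forall t, I t -> 0 < t)
  (S : G -> Prop) (L : list R) (HL : forall x, S x -> In (phi x) L)
  (Hrep : replaces_unif mul e phi alpha S I) :
  exists X : list (list R), X <> nil /\
      forall t, I t ->
        (exists x, In x X /\ phit mul e phi t alpha = tnorm t x) /\
        (forall x, In x X -> phit mul e phi t alpha <= tnorm t x).
Proof.
  destruct (classic (exists l, Forall S l /\ gprod mul e l = alpha)) as [[l0 [Hl0S Hl0g]]|Hno].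
  2:{ set (c := Inf (fun _ : R => False)).
      assert (Hc : forall t, I t -> phit mul e phi t alpha = c).
      { intros t Ht. rewrite (Hrep t Ht). unfold c. f_equal.
        apply functional_extensionality. intro v. apply propositional_extensionality.
        split; [|intros []]. intros [l [H1 [H2 _]]]. apply Hno; eauto. }
      exists [[c]]. split; [congruence|]. intros t Ht.
      assert (Hnn : 0 <= c) by (rewrite <- (Hc t Ht); apply phit_nonneg; auto).
      assert (Htn : tnorm t [c] = c).
      { rewrite tnorm_Psum. unfold Psum; simpl. rewrite Rplus_0_r, Rabs_pos_eq by auto.
        apply rpow_inv_pow; auto. }
      split.
      - exists [c]. split; [left; auto|]. rewrite Htn; auto.
      - intros x [<-|[]]. rewrite Htn, Hc; auto; lra. }
  set (L' := nodup Req_EM_T L).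
  set (cv := fun v : list R => map (fun y => count_occ Req_EM_T v y) L').
  set (A := fun a => exists l, Forall S l /\ gprod mul e l = alpha /\ a = cv (map phi l)).
  destruct (dickson (length L') A) as [B [HB1 HB2]].
  { intros a [l [_ [_ ->]]]. unfold cv. apply length_map. }
  destruct (fin_choice (fun l => Forall S l /\ gprod mul e l = alpha)
             (fun b Z => exists l, In l Z /\ b = cv (map phi l))) with (l := B) as [Z [HZ1 HZ2]].
  { intros a Z Z' Hz [l [H1 H2]]. exists l; auto. }
  { intros b Hb. destruct (HB1 b Hb) as [l [H1 [H2 H3]]]. exists [l]. split.
    - intros z [<-|[]]; auto.
    - exists l; split; [left|]; auto. }
  assert (Hsub : forall l, Forall S l -> forall x, In x (map phi l) -> In x L').
  { intros l Hl x Hx. apply in_map_iff in Hx. destruct Hx as [g [<- Hg]].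
    rewrite Forall_forall in Hl. unfold L'. apply nodup_In. apply HL; auto. }
  assert (Hdom : forall l, Forall S l -> gprod mul e l = alpha ->
            exists l', In l' Z /\ forall t, Psum t (map phi l') <= Psum t (map phi l)).
  { intros l Hl Hg. destruct (HB2 (cv (map phi l))) as [b [Hb1 Hb2]]; [exists l; auto|].
    destruct (HZ2 b Hb1) as [l' [Hl'1 Hl'2]]. exists l'. split; auto. intro t.
    destruct (HZ1 l' Hl'1) as [HS' _].
    rewrite (Psum_wsumf t (map phi l') L'), (Psum_wsumf t (map phi l) L');
      try apply NoDup_nodup; try (apply Hsub; auto).
    apply wsumf_mono. subst b. auto. }
  assert (HZne : Z <> nil).
  { destruct (Hdom l0 Hl0S Hl0g) as [l' [H _]]. intro HZ; rewrite HZ in H; destruct H. }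
  exists (map (map phi) Z). split.
  { destruct Z; [congruence|simpl; congruence]. }
  intros t Ht. pose proof (HIpos t Ht) as Htpos.
  split.
  - destruct (argmin_list (fun l => tnorm t (map phi l)) Z HZne) as [x [Hx1 Hx2]].
    exists (map phi x). split; [apply in_map; auto|].
    rewrite (Hrep t Ht). apply (glb_unique (tvals mul e phi S t alpha)).
    + apply Inf_spec; [|apply tvals_nonneg]. exists (tnorm t (map phi x)), x.
      destruct (HZ1 x Hx1); auto.
    + split.
      * intros v [l [Hl1 [Hl2 ->]]]. destruct (Hdom l Hl1 Hl2) as [l' [Hl'1 Hl'2]].
        apply Rle_trans with (tnorm t (map phi l')); [apply Hx2; auto|].
        apply tnorm_le_iff; auto.
      * intros b Hb. apply Hb. exists x. destruct (HZ1 x Hx1); auto.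
  - intros x Hx. apply in_map_iff in Hx. destruct Hx as [l [<- Hl]].
    apply phit_le; auto. destruct (HZ1 l Hl); auto.
Qed.


Lemma Esum_cont l t eps : 0 < eps -> exists d, 0 < d /\ forall s, Rabs (s - t) < d -> Rabs (Esum l s - Esum l t) < eps.
Proof.
  intros He.
  assert (Hc : continuity_pt (Esum l) t).
  { apply derivable_continuous_pt. exists (Esum (dcoefs l) t). apply Esum_deriv. }
  destruct (Hc eps He) as [d [Hd Hs]]. exists d. split; auto. intros s Hst.
  destruct (Req_EM_T s t) as [->|Hne].
  - rewrite Rminus_diag, Rabs_R0. auto.
  - apply (Hs s). split; [split; [exact I|auto]|]. simpl. unfold R_dist. auto.
Qed.

Lemma Psum_lt_nbhd v w t : Psum t v < Psum t w ->
  exists d, 0 < d /\ forall s, Rabs (s - t) < d -> Psum s v < Psum s w.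
Proof.
  intros H. set (l := coefs w ++ negc (coefs v)).
  assert (Hl : forall s, Esum l s = Psum s w - Psum s v).
  { intro s. unfold l. rewrite Esum_app, Esum_neg, <- !Psum_Esum. ring. }
  destruct (Esum_cont l t (Psum t w - Psum t v)) as [d [Hd Hs]]; [lra|].
  exists d. split; auto. intros s Hst. specialize (Hs s Hst). rewrite !Hl in Hs.
  apply Rabs_def2 in Hs. lra.
Qed.

Lemma in_oint_nbhd lo hi t : in_oint lo hi t -> exists d, 0 < d /\ forall s, Rabs (s - t) < d -> in_oint lo hi s.
Proof.
  intros [H1 H2].
  set (d1 := match lo with Some a => t - a | None => 1 end).
  set (d2 := match hi with Some b => b - t | None => 1 end).
  assert (0 < d1) by (unfold d1; destruct lo; lra).
  assert (0 < d2) by (unfold d2; destruct hi; lra).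
  exists (Rmin d1 d2). split; [apply Rmin_glb_lt; auto|]. intros s Hs.
  pose proof (Rmin_l d1 d2); pose proof (Rmin_r d1 d2).
  apply Rabs_def2 in Hs. split.
  - destruct lo; auto. unfold d1 in *. lra.
  - destruct hi; auto. unfold d2 in *. lra.
Qed.

Lemma fin_delta {A : Type} (Q : A -> R -> Prop) (Hmono : forall a d d', 0 < d' <= d -> Q a d -> Q a d') :
  forall l, (forall a, In a l -> exists d, 0 < d /\ Q a d) -> exists d, 0 < d /\ forall a, In a l -> Q a d.
Proof.
  induction l as [|a l IH]; intros H.
  - exists 1. split; [lra|intros a []].
  - destruct (H a (or_introl eq_refl)) as [d1 [Hd1 Q1]].
    destruct (IH (fun b h => H b (or_intror h))) as [d2 [Hd2 Q2]].
    exists (Rmin d1 d2). pose proof (Rmin_l d1 d2); pose proof (Rmin_r d1 d2).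
    assert (0 < Rmin d1 d2) by (apply Rmin_glb_lt; auto).
    split; auto. intros b [<-|Hb]; [apply (Hmono a d1)|apply (Hmono b d2)]; auto; lra.
Qed.

Lemma i_to_ii {G} (mul : G -> G -> G) (e : G) (phi : G -> R) (alpha : G)
  (mul_e : forall x, mul x e = x) (lo : R) (hi : option R) (lo_nonneg : 0 <= lo)
  (X : list (list R))
  (HX : forall t, in_oint (Some lo) hi t ->
        (exists x, In x X /\ phit mul e phi t alpha = tnorm t x) /\
        (forall x, In x X -> phit mul e phi t alpha <= tnorm t x)) :
  exists L : list R, forall t, exceptional mul e phi alpha (in_oint (Some lo) hi) t -> In t L.
Proof.
  set (I := in_oint (Some lo) hi).
  assert (HIpos : forall t, I t -> 0 < t). { intros t [H _]. lra. }
  destruct (fin_choice (fun _ : R => True)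
    (fun p Z => (forall s, Psum s (fst p) = Psum s (snd p)) \/
                (forall t, I t -> Psum t (fst p) = Psum t (snd p) -> In t Z)))
    with (l := list_prod X X) as [Z [_ HZ]].
  { intros a Z Z' Hz [H|H]; [left; auto|right; intros; auto]. }
  { intros [x y] _. simpl.
    destruct (classic (exists zs, NoDup zs /\ length zs = S (length x + length y) /\
                Forall (fun z => I z /\ Psum z x = Psum z y) zs)) as [[zs [H1 [H2 H3]]]|Hno].
    - exists nil. split; [intros z []|]. left. apply (Psum_ident x y zs H1); [lia|].
      rewrite Forall_forall in H3. intros z Hz; apply H3; auto.
    - destruct (bounded_finite R _ _ Hno) as [Z HZ]. exists Z. split; [auto|]. right.
      intros t Ht Heq. apply HZ. split; auto. }
  exists Z. intros t [Ht Hns]. apply NNPP. intro HtZ. apply Hns.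
  destruct (HX t Ht) as [[x [Hx Hxt]] _].
  assert (Htpos := HIpos t Ht).
  destruct (fin_delta (fun y d => forall s, Rabs (s - t) < d -> I s -> tnorm s x <= tnorm s y))
    with (l := X) as [d [Hd Hdy]].
  { intros a d d' Hdd Hq s Hs. apply Hq. lra. }
  { intros y Hy. destruct (HZ (x, y)) as [Heq|Hfin]; [apply in_prod; auto| |]; simpl in *.
    - exists 1. split; [lra|]. intros s _ Hs. right. apply tnorm_eq_iff; auto.
    - assert (Hne : Psum t x <> Psum t y) by (intro Heq; apply HtZ; auto).
      assert (Hle : Psum t x <= Psum t y).
      { apply tnorm_le_iff; auto. rewrite <- Hxt. apply (proj2 (HX t Ht)); auto. }
      destruct (Psum_lt_nbhd x y t) as [d [Hd Hs]]; [lra|].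
      exists d. split; auto. intros s Hst HIs. apply tnorm_le_iff; auto. left; auto. }
  destruct (in_oint_nbhd (Some lo) hi t Ht) as [dI [HdI HIs]].
  pose proof (Rmin_l d dI); pose proof (Rmin_r d dI).
  assert (0 < Rmin d dI) by (apply Rmin_glb_lt; auto).
  set (d' := Rmin d dI) in *.
  exists (Some (t - d')), (Some (t + d')). split; [split; simpl; lra|split].
  - intros s [Hs1 Hs2]. apply HIs. apply Rabs_def1; simpl in *; lra.
  - exists x. intros s [Hs1 Hs2]. simpl in Hs1, Hs2.
    assert (Hs : Rabs (s - t) < d') by (apply Rabs_def1; lra).
    assert (HIs' : I s) by (apply HIs; lra).
    destruct (HX s HIs') as [[y [Hy Hys]] Hall].
    apply Rle_antisym; [apply Hall; auto|]. rewrite Hys. apply (Hdy y Hy s); auto. lra.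
Qed.


Lemma in_oint_convex lo hi s t u : in_oint lo hi s -> in_oint lo hi t -> s <= u <= t -> in_oint lo hi u.
Proof.
  intros [A1 A2] [B1 B2] H. split; [destruct lo; auto; lra|destruct hi; auto; lra].
Qed.

Lemma local_list {G} (mul : G -> G -> G) (e : G) (phi : G -> R) (alpha : G)
  (G_countable : exists f : nat -> G, forall x, exists n, f n = x)
  (lo : R) (hi : option R) (lo_nonneg : 0 <= lo)
  (att : forall t, in_oint (Some lo) hi t -> attained mul e phi t alpha) t :
  standard mul e phi alpha (in_oint (Some lo) hi) t ->
  exists l, gprod mul e l = alpha /\ exists d, 0 < d /\
    forall s, Rabs (s - t) < d -> in_oint (Some lo) hi s /\ phit mul e phi s alpha = tnorm s (map phi l).
Proof.
  intros [lo' [hi' [Ht [HJI [x Hx]]]]].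
  destruct G_countable as [f Hf].
  destruct (in_oint_nbhd lo' hi' t Ht) as [d [Hd HdJ]].
  assert (Hch : forall s, exists n, Rabs (s - t) < d ->
             gprod mul e (map f (decnat n)) = alpha /\
             tnorm s (map phi (map f (decnat n))) = phit mul e phi s alpha).
  { intro s. destruct (classic (Rabs (s - t) < d)) as [Hs|Hs].
    - destruct (att s (HJI s (HdJ s Hs))) as [l [Hl1 Hl2]].
      destruct (list_enum G f Hf l) as [n Hn]. exists n. intros _. rewrite Hn; auto.
    - exists 0%nat. intro; contradiction. }
  destruct (choice _ Hch) as [g Hg].
  destruct (fiber_big g (fun n => S (length x + length (decnat n))) (t - d) (t + d)) as [n [zs [H1 [H2 H3]]]]; [lra|].
  set (l := map f (decnat n)).
  assert (Hpos : forall s, in_oint (Some lo) hi s -> 0 < s). { intros s [Hs _]. lra. }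
  assert (Heq : forall s, 0 < s -> tnorm s (map phi l) = tnorm s x).
  { apply (tnorm_ident _ _ zs H1).
    - unfold l. rewrite !length_map, H2. lia.
    - intros z Hz. destruct (H3 z Hz) as [Hz1 Hz2].
      assert (Hzt : Rabs (z - t) < d) by (apply Rabs_def1; lra).
      destruct (Hg z Hzt) as [_ Hgz]. rewrite Hz2 in Hgz.
      split; [apply Hpos, HJI, HdJ; auto|]. unfold l. rewrite Hgz. apply Hx. apply HdJ; auto. }
  exists l. split.
  { assert (Ht0 : Rabs (t - t) < d) by (rewrite Rminus_diag, Rabs_R0; auto).
    destruct zs as [|z zs]; [simpl in H2; lia|]. destruct (H3 z (or_introl eq_refl)) as [Hz1 Hz2].
    assert (Hzt : Rabs (z - t) < d) by (apply Rabs_def1; lra).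
    destruct (Hg z Hzt) as [Hgz _]. rewrite Hz2 in Hgz. exact Hgz. }
  exists d. split; auto. intros s Hs. pose proof (HJI s (HdJ s Hs)) as HIs. split; auto.
  rewrite Heq by (apply Hpos; auto). apply Hx. apply HdJ; auto.
Qed.

Lemma agree_lists {G} (mul : G -> G -> G) (e : G) (phi : G -> R) (alpha : G) l1 l2 c d :
  0 <= c -> c < d ->
  (forall s, c < s < d -> phit mul e phi s alpha = tnorm s (map phi l1) /\
                          phit mul e phi s alpha = tnorm s (map phi l2)) ->
  forall s, 0 < s -> tnorm s (map phi l1) = tnorm s (map phi l2).
Proof.
  intros Hc Hcd H. destruct (interval_points (S (length (map phi l1) + length (map phi l2))) c d Hcd) as [zs [H1 [H2 H3]]].
  apply (tnorm_ident _ _ zs H1); [lia|]. intros z Hz. destruct (H3 z Hz). split; [lra|].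
  destruct (H z); auto. congruence.
Qed.

Lemma forward {G} (mul : G -> G -> G) (e : G) (phi : G -> R) (alpha : G)
  (G_countable : exists f : nat -> G, forall x, exists n, f n = x)
  (lo : R) (hi : option R) (lo_nonneg : 0 <= lo)
  (att : forall t, in_oint (Some lo) hi t -> attained mul e phi t alpha) a b l d0 :
  a < b -> (forall u, a <= u <= b -> in_oint (Some lo) hi u /\ standard mul e phi alpha (in_oint (Some lo) hi) u) ->
  0 < d0 -> (forall s, Rabs (s - a) < d0 -> phit mul e phi s alpha = tnorm s (map phi l)) ->
  forall u, a <= u <= b -> phit mul e phi u alpha = tnorm u (map phi l).
Proof.
  intros Hab Hst Hd0 Hl0.
  assert (Hapos : 0 < a). { destruct (Hst a) as [[H _] _]; lra. }
  set (E := fun u => a <= u <= b /\ forall v, a <= v <= u -> phit mul e phi v alpha = tnorm v (map phi l)).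
  destruct (completeness E) as [m [Hub Hlub]].
  { exists b. intros u [Hu _]. lra. }
  { exists a. split; [lra|]. intros v Hv. replace v with a by lra. apply Hl0. rewrite Rminus_diag, Rabs_R0; auto. }
  assert (Ham : a <= m). { apply Hub. split; [lra|]. intros v Hv. replace v with a by lra. apply Hl0. rewrite Rminus_diag, Rabs_R0; auto. }
  assert (Hmb : m <= b). { apply Hlub. intros u [Hu _]. lra. }
  assert (Hgood : forall v, a <= v < m -> phit mul e phi v alpha = tnorm v (map phi l)).
  { intros v Hv. destruct (classic (exists u, E u /\ v < u)) as [[u [[_ Hu] Hvu]]|Hno].
    - apply Hu. lra.
    - exfalso. assert (m <= v). { apply Hlub. intros u Hu. destruct (Rle_dec u v); auto. exfalso; apply Hno; exists u; split; auto; lra. } lra. }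
  destruct (local_list mul e phi alpha G_countable lo hi lo_nonneg att m (proj2 (Hst m (conj Ham Hmb))))
    as [lm [_ [dm [Hdm Hlm]]]].
  assert (Hsame : forall s, 0 < s -> tnorm s (map phi l) = tnorm s (map phi lm)).
  { destruct (Req_EM_T a m) as [Heq|Hne].
    - subst m. apply (agree_lists mul e phi alpha l lm a (a + Rmin d0 dm)); [lra| |].
      { pose proof (Rmin_glb_lt d0 dm 0 Hd0 Hdm). lra. }
      intros s Hs. pose proof (Rmin_l d0 dm); pose proof (Rmin_r d0 dm).
      split; [apply Hl0|apply (Hlm s)]; apply Rabs_def1; lra.
    - apply (agree_lists mul e phi alpha l lm (Rmax a (m - dm)) m).
      + pose proof (Rmax_l a (m - dm)); lra.
      + apply Rmax_lub_lt; lra.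
      + intros s Hs. pose proof (Rmax_l a (m - dm)); pose proof (Rmax_r a (m - dm)). split.
        * apply Hgood; lra.
        * apply (Hlm s). apply Rabs_def1; lra. }
  assert (Hmpt : forall v, m <= v < m + dm -> phit mul e phi v alpha = tnorm v (map phi l)).
  { intros v Hv. rewrite Hsame by lra. apply (Hlm v). apply Rabs_def1; lra. }
  assert (Hmeqb : m = b).
  { destruct (Req_EM_T m b) as [|Hne]; auto. exfalso.
    set (u := Rmin (m + dm / 2) b).
    assert (Hu1 : m < u). { unfold u. apply Rmin_glb_lt; lra. }
    assert (Hu2 : u <= m + dm / 2) by apply Rmin_l.
    assert (Hu3 : u <= b) by apply Rmin_r.
    assert (E u). { split; [lra|]. intros v Hv. destruct (Rlt_dec v m); [apply Hgood; lra|apply Hmpt; lra]. }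
    specialize (Hub u H). lra. }
  intros u Hu. destruct (Rlt_dec u m); [apply Hgood; lra|apply Hmpt; lra].
Qed.


Definition cnt (L : list R) (t : R) : nat := length (filter (fun y => if Rlt_dec y t then true else false) L).

Lemma cnt_mono L s t : s <= t -> (cnt L s <= cnt L t)%nat.
Proof.
  intros H. unfold cnt. induction L as [|y L IH]; simpl; auto.
  destruct (Rlt_dec y s); destruct (Rlt_dec y t); simpl; try lia. lra.
Qed.

Lemma cnt_strict L s t y : In y L -> s <= y < t -> (cnt L s < cnt L t)%nat.
Proof.
  intros Hy H. unfold cnt. induction L as [|z L IH]; [destruct Hy|]. simpl.
  pose proof (cnt_mono L s t ltac:(lra)) as Hm. unfold cnt in Hm.
  destruct Hy as [->|Hy].
  - destruct (Rlt_dec y s); [lra|]. destruct (Rlt_dec y t); [|lra]. simpl. lia.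
  - specialize (IH Hy). destruct (Rlt_dec z s); destruct (Rlt_dec z t); simpl; try lia. lra.
Qed.

Lemma cnt_le L t : (cnt L t <= length L)%nat.
Proof. unfold cnt. apply filter_length_le. Qed.

Lemma ii_to_iii {G} (mul : G -> G -> G) (e : G) (phi : G -> R) (alpha : G)
  (mul_e : forall x, mul x e = x)
  (G_countable : exists f : nat -> G, forall x, exists n, f n = x)
  (lo : R) (hi : option R) (lo_nonneg : 0 <= lo)
  (att : forall t, in_oint (Some lo) hi t -> attained mul e phi t alpha)
  (L : list R) (HL : forall t, exceptional mul e phi alpha (in_oint (Some lo) hi) t -> In t L) :
  exists Rl : list G, In e Rl /\ replaces_unif mul e phi alpha (fun x => In x Rl) (in_oint (Some lo) hi).
Proof.
  set (I := in_oint (Some lo) hi) in *.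
  assert (Hstd : forall u, I u -> ~ In u L -> standard mul e phi alpha I u).
  { intros u Hu Hn. apply NNPP. intro Hns. apply Hn, HL. split; auto. }
  assert (Hpos : forall s, I s -> 0 < s). { intros s [Hs _]. simpl in Hs. lra. }
  set (Qa := fun (t : R) (Z : list G) => exists l, (forall z, In z l -> In z Z) /\
               gprod mul e l = alpha /\ tnorm t (map phi l) = phit mul e phi t alpha).
  assert (Qa_mono : forall t Z Z', (forall z, In z Z -> In z Z') -> Qa t Z -> Qa t Z').
  { intros t Z Z' HZ [l [H1 H2]]. exists l. split; auto. }
  destruct (fin_choice (fun _ : G => True)
     (fun k Z => forall t, I t -> ~ In t L -> cnt L t = k -> Qa t Z)) with (l := seq 0 (S (length L)))
     as [Z1 [_ HZ1]].
  { intros k Z Z' HZ H t H1 H2 H3. apply (Qa_mono t Z); auto. }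
  { intros k _. destruct (classic (exists s, I s /\ ~ In s L /\ cnt L s = k)) as [[s [Hs1 [Hs2 Hs3]]]|Hno].
    2:{ exists nil. split; [intros z []|]. intros t H1 H2 H3. exfalso; apply Hno; exists t; auto. }
    destruct (local_list mul e phi alpha G_countable lo hi lo_nonneg att s (Hstd s Hs1 Hs2))
      as [ls [Hls [ds [Hds Hlsd]]]].
    exists ls. split; [auto|]. intros t Ht HtL Htk. exists ls. split; [auto|split; auto].
    assert (Hbetween : forall a b, (a = s \/ a = t) -> (b = s \/ b = t) -> a < b ->
              forall u, a <= u <= b -> I u /\ standard mul e phi alpha I u).
    { intros a b Ha Hb Hab u Hu.
      assert (HIu : I u).
      { destruct Ha as [->| ->]; destruct Hb as [->| ->]; try lra.
        - exact (in_oint_convex (Some lo) hi s t u Hs1 Ht Hu).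
        - exact (in_oint_convex (Some lo) hi t s u Ht Hs1 Hu). }
      split; auto. apply Hstd; auto. intro HuL.
      destruct Ha as [->| ->]; destruct Hb as [->| ->]; try lra.
      - destruct (Req_EM_T u s) as [->|]; [contradiction|].
        destruct (Req_EM_T u t) as [->|]; [contradiction|].
        pose proof (cnt_strict L s t u HuL ltac:(lra)). lia.
      - destruct (Req_EM_T u s) as [->|]; [contradiction|].
        destruct (Req_EM_T u t) as [->|]; [contradiction|].
        pose proof (cnt_strict L t s u HuL ltac:(lra)). lia. }
    destruct (Rtotal_order s t) as [Hst|[Hst|Hst]].
    - symmetry. apply (forward mul e phi alpha G_countable lo hi lo_nonneg att s t ls ds); auto; try lra.
      + intros u Hu. apply (Hbetween s t); auto.
      + intros u Hu. apply (proj2 (Hlsd u Hu)).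
    - subst t. symmetry. refine (proj2 (Hlsd s _)). rewrite Rminus_diag, Rabs_R0; auto.
    - destruct (local_list mul e phi alpha G_countable lo hi lo_nonneg att t (Hstd t Ht HtL))
        as [lt [_ [dt [Hdt Hltd]]]].
      assert (Hfw : forall u, t <= u <= s -> phit mul e phi u alpha = tnorm u (map phi lt)).
      { apply (forward mul e phi alpha G_countable lo hi lo_nonneg att t s lt dt); auto.
        - intros u Hu. apply (Hbetween t s); auto.
        - intros u Hu. apply (proj2 (Hltd u Hu)). }
      assert (Hag : forall u, 0 < u -> tnorm u (map phi ls) = tnorm u (map phi lt)).
      { apply (agree_lists mul e phi alpha ls lt (Rmax t (s - ds)) s).
        - pose proof (Rmax_l t (s - ds)). pose proof (Hpos t Ht). lra.
        - apply Rmax_lub_lt; lra.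
        - intros u Hu. pose proof (Rmax_l t (s - ds)); pose proof (Rmax_r t (s - ds)). split.
          + refine (proj2 (Hlsd u _)). apply Rabs_def1; lra.
          + apply Hfw; lra. }
      rewrite Hag by (apply Hpos; auto). symmetry. apply Hfw; lra. }
  destruct (fin_choice (fun _ : G => True) (fun y Z => I y -> Qa y Z)) with (l := L) as [Z2 [_ HZ2]].
  { intros y Z Z' HZ H Hy. apply (Qa_mono y Z); auto. }
  { intros y _. destruct (classic (I y)) as [Hy|Hy].
    - destruct (att y Hy) as [l [H1 H2]]. exists l. split; auto. intros _. exists l. auto.
    - exists nil. split; [intros z []|]. intro; contradiction. }
  exists (e :: Z1 ++ Z2). split; [left; auto|].
  intros t Ht.
  assert (Hq : Qa t (Z1 ++ Z2)).
  { destruct (classic (In t L)) as [HtL|HtL].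
    - apply (Qa_mono t Z2); [intros z Hz; apply in_or_app; auto|]. apply HZ2; auto.
    - apply (Qa_mono t Z1); [intros z Hz; apply in_or_app; auto|].
      apply (HZ1 (cnt L t)); auto. apply in_seq. pose proof (cnt_le L t). lia. }
  destruct Hq as [l [H1 [H2 H3]]].
  apply (replaces_of_attain mul e phi t alpha mul_e _ l); auto.
  rewrite Forall_forall. intros z Hz. right. auto.
Qed.


Theorem theorem2p2
  (G : Type) (mul : G -> G -> G) (inv : G -> G) (e : G)
  (mul_assoc : forall x y z, mul x (mul y z) = mul (mul x y) z)
  (mul_comm : forall x y, mul x y = mul y x)
  (mul_e : forall x, mul x e = x)
  (mul_inv : forall x, mul x (inv x) = e)
  (G_countable : exists f : nat -> G, forall x, exists n, f n = x)
  (phi : G -> R)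
  (phi_nonneg : forall x, 0 <= phi x)
  (phi_e : phi e = 0)
  (phi_inv : forall x, phi x = phi (inv x))
  (alpha : G)
  (lo : R) (hi : option R)
  (lo_nonneg : 0 <= lo)
  (I_nonempty : match hi with Some b => lo < b | None => True end)
  (att : forall t, in_oint (Some lo) hi t -> attained mul e phi t alpha) :
  let I := in_oint (Some lo) hi in
  (* (i) <-> (ii) *)
  ((exists X : list (list R), X <> nil /\
      forall t, I t ->
        (exists x, In x X /\ phit mul e phi t alpha = tnorm t x) /\
        (forall x, In x X -> phit mul e phi t alpha <= tnorm t x))
   <->
   (exists L : list R, forall t, exceptional mul e phi alpha I t -> In t L)) /\
  (* (ii) <-> (iii) *)
  ((exists L : list R, forall t, exceptional mul e phi alpha I t -> In t L)
   <->
   (exists Rl : list G, In e Rl /\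
      replaces_unif mul e phi alpha (fun x => In x Rl) I)) /\
  (* (iii) <-> (iv) *)
  ((exists Rl : list G, In e Rl /\
      replaces_unif mul e phi alpha (fun x => In x Rl) I)
   <->
   (exists S : G -> Prop, S e /\
      (exists L : list R, forall x, S x -> In (phi x) L) /\
      replaces_unif mul e phi alpha S I)).
Proof.
  intros I.
  assert (HIpos : forall t, I t -> 0 < t). { intros t [Ht _]. simpl in Ht. lra. }
  assert (i_ii : forall X : list (list R), X <> nil /\
      (forall t, I t ->
        (exists x, In x X /\ phit mul e phi t alpha = tnorm t x) /\
        (forall x, In x X -> phit mul e phi t alpha <= tnorm t x)) ->
      exists L : list R, forall t, exceptional mul e phi alpha I t -> In t L).
  { intros X [_ HX]. apply (i_to_ii mul e phi alpha mul_e lo hi lo_nonneg X HX). }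
  assert (ii_iii : (exists L : list R, forall t, exceptional mul e phi alpha I t -> In t L) ->
     exists Rl : list G, In e Rl /\ replaces_unif mul e phi alpha (fun x => In x Rl) I).
  { intros [L HL]. apply (ii_to_iii mul e phi alpha mul_e G_countable lo hi lo_nonneg att L HL). }
  assert (iii_iv : (exists Rl : list G, In e Rl /\ replaces_unif mul e phi alpha (fun x => In x Rl) I) ->
     exists S : G -> Prop, S e /\ (exists L : list R, forall x, S x -> In (phi x) L) /\
      replaces_unif mul e phi alpha S I).
  { intros [Rl [H1 H2]]. exists (fun x => In x Rl). split; auto. split; auto.
    exists (map phi Rl). intros x Hx. apply in_map; auto. }
  assert (iv_i : (exists S : G -> Prop, S e /\ (exists L : list R, forall x, S x -> In (phi x) L) /\
      replaces_unif mul e phi alpha S I) ->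
      exists X : list (list R), X <> nil /\
      forall t, I t ->
        (exists x, In x X /\ phit mul e phi t alpha = tnorm t x) /\
        (forall x, In x X -> phit mul e phi t alpha <= tnorm t x)).
  { intros [S [_ [[L HL] Hrep]]]. apply (iv_to_i mul e phi alpha mul_e I HIpos S L HL Hrep). }
  split; [|split]; split; intro H.
  - destruct H as [X HX]. exact (i_ii X HX).
  - exact (iv_i (iii_iv (ii_iii H))).
  - exact (ii_iii H).
  - destruct (iv_i (iii_iv H)) as [X HX]. exact (i_ii X HX).
  - exact (iii_iv H).
  - exact (ii_iii (let (X, HX) := iv_i H in i_ii X HX)).
Qed.
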